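(* Let $L$ be a distributive lattice and $l\in L$. Then $|\delta_l|$ is a weak order unit of $\mathrm{FBL}\langle L\rangle$: if $f\in\mathrm{FBL}\langle L\rangle$ satisfies $|f|\wedge|\delta_l|=0$, then $f=0$.
   Context: $L^*$ is the set of all lattice homomorphisms $x^*:L\to[-1,1]$ (a subset of $\mathbb R^L$ with the product topology); for $x\in L$, $\delta_x:L^*\to\mathbb R$ is $\delta_x(x^* )=x^*(x)$. A function $f:L^*\to\mathbb R$ is positively homogeneous if $f(\lambda x^* )=\lambda f(x^* )$ whenever $\lambda\ge0$ and $\lambda x^*\in L^*$; for such $f$, $\|f\|=\sup\{\sum_{i=1}^m|f(x_i^* )|: m\in\mathbb N,\ x_i^*\in L^*,\ \sup_{x\in L}\sum_{i=1}^m|x_i^*(x)|\le1\}$. $\mathrm{FBL}\langle L\rangle$ is the norm closure of the vector sublattice generated by $\{\delta_x:x\in L\}$ inside the Banach lattice of positively homogeneous functions on $L^*$ with finite norm, with pointwise order and operations. *)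

(* Defs.v *)
From mathcomp Require Import all_boot all_order all_algebra.
From mathcomp Require Import reals.
Set Implicit Arguments. Unset Strict Implicit. Unset Printing Implicit Defensive.
Import Order.TTheory GRing.Theory Num.Theory.
Local Open Scope ring_scope.

Section FBL.
Variables (R : realType) (d : Order.disp_t) (L : distrLatticeType d).

Definition isLstar (x : L -> R) : Prop :=
  (forall a, -1 <= x a <= 1) /\
  (forall a b, x (Order.join a b) = Num.max (x a) (x b)) /\
  (forall a b, x (Order.meet a b) = Num.min (x a) (x b)).

Definition delta (a : L) : (L -> R) -> R := fun x => x a.

Definition pos_homogeneous (f : (L -> R) -> R) : Prop :=
  forall (lam : R) (x : L -> R), 0 <= lam -> isLstar x ->
    isLstar (fun a => lam * x a) -> f (fun a => lam * x a) = lam * f x.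

(* ||f|| <= c, with ||f|| the sup in the paper *)
Definition norm_le (f : (L -> R) -> R) (c : R) : Prop :=
  forall (m : nat) (xs : 'I_m -> (L -> R)),
    (forall i, isLstar (xs i)) ->
    (forall a, \sum_(i < m) `|xs i a| <= 1) ->
    \sum_(i < m) `|f (xs i)| <= c.

Inductive gen_sublattice : ((L -> R) -> R) -> Prop :=
  | gen_delta a : gen_sublattice (delta a)
  | gen_add f g : gen_sublattice f -> gen_sublattice g ->
      gen_sublattice (fun x => f x + g x)
  | gen_scale (c : R) f : gen_sublattice f -> gen_sublattice (fun x => c * f x)
  | gen_max f g : gen_sublattice f -> gen_sublattice g ->
      gen_sublattice (fun x => Num.max (f x) (g x))
  | gen_min f g : gen_sublattice f -> gen_sublattice g ->
      gen_sublattice (fun x => Num.min (f x) (g x)).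

(* FBL<L>: norm closure of the generated sublattice inside the Banach lattice
   of positively homogeneous functions on L* with finite norm *)
Definition inFBL (f : (L -> R) -> R) : Prop :=
  pos_homogeneous f /\ (exists c : R, norm_le f c) /\
  (forall eps : R, 0 < eps -> exists g, gen_sublattice g /\
      norm_le (fun x => f x - g x) eps).

End FBL.

(* Main.v *)
Require Import Defs.
From mathcomp Require Import all_boot all_order all_algebra.
From mathcomp Require Import reals.
From mathcomp Require Import ring lra.
Import Order.TTheory GRing.Theory Num.Theory.
Local Open Scope ring_scope.

Section Aux.
Variables (R : realType) (d : Order.disp_t) (L : distrLatticeType d).

Lemma max_lip (a b c e p q : R) : `|a - c| <= p -> `|b - e| <= q ->
  `|Num.max a b - Num.max c e| <= p + q.
Proof.
rewrite !ler_norml => /andP[h1 h2] /andP[h3 h4].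
case: (leP a b) => h5; case: (leP c e) => h6; apply/andP; split; lra.
Qed.

Lemma min_lip (a b c e p q : R) : `|a - c| <= p -> `|b - e| <= q ->
  `|Num.min a b - Num.min c e| <= p + q.
Proof.
rewrite !ler_norml => /andP[h1 h2] /andP[h3 h4].
case: (leP a b) => h5; case: (leP c e) => h6; apply/andP; split; lra.
Qed.

Lemma gen_lip (g : (L -> R) -> R) : gen_sublattice g -> exists K : R, 0 <= K /\
  forall x y (t : R), (forall a, `|x a - y a| <= t) -> `|g x - g y| <= K * t.
Proof.
elim => [a|f1 g1 _ [K1 [K1p H1]] _ [K2 [K2p H2]]|c f1 _ [K1 [K1p H1]]
        |f1 g1 _ [K1 [K1p H1]] _ [K2 [K2p H2]]|f1 g1 _ [K1 [K1p H1]] _ [K2 [K2p H2]]].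
- exists 1; split => // x y t h; rewrite mul1r; exact: h.
- exists (K1 + K2); split; first exact: addr_ge0.
  move=> x y t h; rewrite mulrDl.
  have e : f1 x + g1 x - (f1 y + g1 y) = (f1 x - f1 y) + (g1 x - g1 y) by ring.
  rewrite e; apply: le_trans (ler_normD _ _) _.
  by apply: lerD; [apply: H1|apply: H2].
- exists (`|c| * K1); split; first by rewrite mulr_ge0.
  move=> x y t h; rewrite -mulrBr normrM -mulrA.
  by apply: ler_wpM2l => //; apply: H1.
- exists (K1 + K2); split; first exact: addr_ge0.
  move=> x y t h; rewrite mulrDl; apply: max_lip; [apply: H1|apply: H2]; exact: h.
- exists (K1 + K2); split; first exact: addr_ge0.
  move=> x y t h; rewrite mulrDl; apply: min_lip; [apply: H1|apply: H2]; exact: h.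
Qed.

Lemma mono_max (phi : R -> R) : {homo phi : u v / u <= v} ->
  forall u v, phi (Num.max u v) = Num.max (phi u) (phi v).
Proof.
move=> h u v; case: (leP u v) => huv.
  by rewrite max_r // h.
by rewrite max_l // h // ltW.
Qed.

Lemma mono_min (phi : R -> R) : {homo phi : u v / u <= v} ->
  forall u v, phi (Num.min u v) = Num.min (phi u) (phi v).
Proof.
move=> h u v; case: (leP u v) => huv.
  by rewrite min_l // h.
by rewrite min_r // h // ltW.
Qed.

End Aux.

Theorem mainTheorem13 (R : realType) (d : Order.disp_t) (L : distrLatticeType d)
  (l : L) (f : (L -> R) -> R) :
  inFBL f ->
  (forall x : L -> R, isLstar x -> Num.min `|f x| `|delta l x| = 0) ->
  forall x : L -> R, isLstar x -> f x = 0.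
Proof.
move=> [_ [_ Happ]] Hmin x Hx.
have zero_of : forall z, isLstar z -> z l != 0 -> f z = 0.
  move=> z Hz hz; have := Hmin z Hz; move=> e.
  apply/eqP; rewrite -normr_eq0; apply/eqP.
  apply/le_anti; rewrite normr_ge0 andbT leNgt; apply/negP => hpos.
  have : 0 < Num.min `|f z| `|delta l z| by rewrite lt_min hpos normr_gt0.
  by rewrite e ltxx.
have [hl|hl] := eqVneq (x l) 0; last exact: zero_of.
have Hx1 : forall a, -1 <= x a <= 1 by case: Hx.
have approx : forall (h : (L -> R) -> R) (z : L -> R) (e : R), isLstar z ->
    norm_le h e -> `|h z| <= e.
  move=> h z e Hz Hn.
  have := Hn 1%N (fun _ => z) (fun _ => Hz).
  rewrite big_ord1; apply => a; rewrite big_ord1 ler_norml.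
  by case: Hz => hb _; have := hb a; lra.
have claim : forall eps : R, 0 < eps -> `|f x| <= 3 * eps.
  move=> eps heps.
  have [g [Hg Hn]] := Happ eps heps.
  have [K [K0 HK]] := @gen_lip _ _ _ _ Hg.
  set t := eps / (K + 1).
  have t0 : 0 < t by rewrite /t divr_gt0 //; lra.
  have Kt : K * t <= eps.
    rewrite /t mulrA ler_pdivrMr; last lra.
    nra.
  set y := fun a => Num.min (x a + t) 1.
  have homo : {homo (fun s => Num.min (s + t) 1) : u v / u <= v}.
    move=> u v huv; rewrite le_min; apply/andP; split; rewrite ge_min.
      by rewrite lerD2r huv.
    by rewrite lexx orbT.
  have Hy : isLstar y.
    split; [|split].
    - move=> a; rewrite /y; have := Hx1 a => /andP[h1 h2].
      case: (leP (x a + t) 1) => h3; apply/andP; split; lra.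
    - move=> a b; rewrite /y; case: Hx => _ [-> _]; exact: (@mono_max R _ homo).
    - move=> a b; rewrite /y; case: Hx => _ [_ ->]; exact: (@mono_min R _ homo).
  have fy : f y = 0.
    apply: zero_of => //; rewrite /y hl add0r.
    rewrite gt_eqF // lt_min t0 ltr01 //.
  have dxy : forall a, `|x a - y a| <= t.
    move=> a; rewrite /y ler_norml; have := Hx1 a => /andP[h1 h2].
    case: (leP (x a + t) 1) => h3; apply/andP; split; lra.
  have h1 := approx _ _ _ Hx Hn.
  have h2 := approx _ _ _ Hy Hn.
  have h3 := HK x y t dxy.
  move: h1 h2 h3 Kt; rewrite /= fy !ler_norml.
  set Kt := K * t.
  move=> /andP[a1 a2] /andP[b1 b2] /andP[c1 c2] Kt'.
  apply/andP; split; lra.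
apply/eqP; rewrite -normr_eq0; apply/eqP; apply/le_anti.
rewrite normr_ge0 andbT leNgt; apply/negP => hpos.
have hq : 0 < `|f x| / 4 by rewrite divr_gt0.
have := claim _ hq; move: hq hpos; move: (`|f x|) => u hq hu hle.
clear -hu hle; lra.
Qed.
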